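(* Let $\widetilde L$ be a standardized Laplacian matrix of order $n$ and $P=\widetilde L+J$. Then both $\widetilde L$ and $P$ are semiconvergent, i.e., the limits $\lim_{k\to\infty}\widetilde L^k$ and $\lim_{k\to\infty}P^k$ exist.
   Context: A standardized Laplacian matrix of order $n$ is a real $n\times n$ matrix whose row sums are all $0$ and whose off-diagonal entries are nonpositive with absolute value at most $1/n$. $J$ is the $n\times n$ matrix with all entries $1/n$. *)

(* Defs.v *)
(* real matrices of order n are represented as functions
   nat -> nat -> R, only entries with indices < n being relevant. *)
From Stdlib Require Import Reals.
Open Scope R_scope.

Fixpoint rsum (n : nat) (f : nat -> R) : R :=
  match n with
  | O => 0
  | S m => rsum m f + f m
  end.

Definition mat := nat -> nat -> R.

Definition mat_mul (n : nat) (A B : mat) : mat :=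
  fun i j => rsum n (fun k => A i k * B k j).

Definition mat_id : mat := fun i j => if Nat.eqb i j then 1 else 0.

Definition mat_add (A B : mat) : mat := fun i j => A i j + B i j.

Fixpoint mat_pow (n : nat) (A : mat) (k : nat) : mat :=
  match k with
  | O => mat_id
  | S k' => mat_mul n (mat_pow n A k') A
  end.

Definition Jmat (n : nat) : mat := fun _ _ => / INR n.

Definition standardized_laplacian (n : nat) (L : mat) : Prop :=
  (forall i, (i < n)%nat -> rsum n (fun j => L i j) = 0) /\
  (forall i j, (i < n)%nat -> (j < n)%nat -> i <> j ->
      L i j <= 0 /\ Rabs (L i j) <= / INR n).

Definition semiconvergent (n : nat) (A : mat) : Prop :=
  forall i j, (i < n)%nat -> (j < n)%nat ->
    exists l : R, Un_cv (fun k => mat_pow n A k i j) l.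

(* Main.v *)
Require Import Defs.
From Stdlib Require Import Reals Lra Lia Psatz Classical ClassicalEpsilon.
Open Scope R_scope.

Lemma rsum_ext n f g : (forall m, (m < n)%nat -> f m = g m) -> rsum n f = rsum n g.
Proof. induction n; intros H; simpl; auto. rewrite IHn by (intros; apply H; lia). rewrite H by lia; auto. Qed.

Lemma rsum_plus n f g : rsum n (fun m => f m + g m) = rsum n f + rsum n g.
Proof. induction n; simpl; [lra|]. rewrite IHn; lra. Qed.

Lemma rsum_minus n f g : rsum n (fun m => f m - g m) = rsum n f - rsum n g.
Proof. induction n; simpl; [lra|]. rewrite IHn; lra. Qed.

Lemma rsum_scal_l n c f : rsum n (fun m => c * f m) = c * rsum n f.
Proof. induction n; simpl; [lra|]. rewrite IHn; lra. Qed.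

Lemma rsum_scal_r n c f : rsum n (fun m => f m * c) = rsum n f * c.
Proof. induction n; simpl; [lra|]. rewrite IHn; lra. Qed.

Lemma rsum_const n c : rsum n (fun _ => c) = INR n * c.
Proof. induction n; simpl rsum; [simpl; lra|]. rewrite IHn, S_INR; lra. Qed.

Lemma rsum_le n f g : (forall m, (m < n)%nat -> f m <= g m) -> rsum n f <= rsum n g.
Proof. induction n; intros H; simpl; [lra|]. assert (H1 := H n ltac:(lia)).
  assert (rsum n f <= rsum n g) by (apply IHn; intros; apply H; lia). lra. Qed.

Lemma rsum_nonneg n f : (forall m, (m < n)%nat -> 0 <= f m) -> 0 <= rsum n f.
Proof. intros H. replace 0 with (rsum n (fun _ => 0)). apply rsum_le; auto.
  rewrite rsum_const; lra. Qed.

Lemma rsum_abs n f : Rabs (rsum n f) <= rsum n (fun m => Rabs (f m)).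
Proof. induction n; simpl. rewrite Rabs_R0; lra.
  eapply Rle_trans. apply Rabs_triang. lra. Qed.

Lemma rsum_ge_term n f i : (forall m, (m < n)%nat -> 0 <= f m) -> (i < n)%nat -> f i <= rsum n f.
Proof. induction n; intros H Hi; [lia|]. simpl.
  assert (0 <= rsum n f) by (apply rsum_nonneg; intros; apply H; lia).
  destruct (Nat.eq_dec i n). subst; lra.
  assert (f i <= rsum n f) by (apply IHn; [intros; apply H; lia| lia]).
  assert (0 <= f n) by (apply H; lia). lra. Qed.

Lemma rsum_swap n m (f : nat -> nat -> R) :
  rsum n (fun a => rsum m (fun b => f a b)) = rsum m (fun b => rsum n (fun a => f a b)).
Proof. induction n; simpl. rewrite rsum_const; simpl; lra.
  rewrite IHn, <- rsum_plus. reflexivity. Qed.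

Lemma rsum_delta n f i : (i < n)%nat -> rsum n (fun m => if Nat.eqb m i then f m else 0) = f i.
Proof. induction n; intros Hi; [lia|]. simpl.
  destruct (Nat.eq_dec i n).
  - subst. rewrite Nat.eqb_refl. rewrite (rsum_ext _ _ (fun _ => 0)). rewrite rsum_const; lra.
    intros m Hm. destruct (Nat.eqb_spec m n); [lia|auto].
  - rewrite IHn by lia. destruct (Nat.eqb_spec n i); [lia|lra]. Qed.

Definition eqm n (A B : mat) := forall i j, (i < n)%nat -> (j < n)%nat -> A i j = B i j.

Lemma mul_assoc n A B C i j : mat_mul n (mat_mul n A B) C i j = mat_mul n A (mat_mul n B C) i j.
Proof. unfold mat_mul.
  transitivity (rsum n (fun m => rsum n (fun l => A i l * B l m * C m j))).
  apply rsum_ext; intros; rewrite <- rsum_scal_r; reflexivity.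
  rewrite rsum_swap. apply rsum_ext; intros. rewrite <- rsum_scal_l.
  apply rsum_ext; intros; ring. Qed.

Lemma mul_id_r n A i j : (j < n)%nat -> mat_mul n A mat_id i j = A i j.
Proof. intros Hj. unfold mat_mul, mat_id. rewrite <- (rsum_delta n (fun m => A i m) j Hj).
  apply rsum_ext; intros. destruct (Nat.eqb m j); ring. Qed.

Lemma mul_id_l n A i j : (i < n)%nat -> mat_mul n mat_id A i j = A i j.
Proof. intros Hi. unfold mat_mul, mat_id. rewrite <- (rsum_delta n (fun m => A m j) i Hi).
  apply rsum_ext; intros. rewrite Nat.eqb_sym. destruct (Nat.eqb m i); ring. Qed.

Lemma mul_ext_l n A A' B i j : (forall m, (m < n)%nat -> A i m = A' i m) ->
  mat_mul n A B i j = mat_mul n A' B i j.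
Proof. intros H; unfold mat_mul; apply rsum_ext; intros; rewrite H; auto. Qed.

Lemma mpow_add n A s k i j : (i < n)%nat -> (j < n)%nat ->
  mat_pow n A (s + k) i j = mat_mul n (mat_pow n A s) (mat_pow n A k) i j.
Proof. revert i j; induction k; intros i j Hi Hj.
  - rewrite Nat.add_0_r. simpl. rewrite mul_id_r; auto.
  - rewrite Nat.add_succ_r. simpl. rewrite <- mul_assoc. apply mul_ext_l.
    intros; apply IHk; auto. Qed.

Lemma rowsum_mul n A B i :
  rsum n (fun l => mat_mul n A B i l) = rsum n (fun m => A i m * rsum n (fun l => B m l)).
Proof. unfold mat_mul. rewrite rsum_swap. apply rsum_ext; intros. rewrite rsum_scal_l; auto. Qed.

Lemma rowsum_id n i : (i < n)%nat -> rsum n (fun l => mat_id i l) = 1.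
Proof. intros Hi. unfold mat_id. transitivity (rsum n (fun m => if Nat.eqb m i then (fun _ => 1) m else 0)).
  apply rsum_ext; intros m Hm. rewrite Nat.eqb_sym; reflexivity.
  apply rsum_delta; auto. Qed.

Definition Good n (W : nat -> mat) :=
 (forall k i l, (i<n)%nat -> (l<n)%nat -> 0 <= W k i l) /\
 (forall k i, (i<n)%nat -> rsum n (fun l => W k i l) = 1) /\
 (forall s k i l, (i<n)%nat -> (l<n)%nat -> W (s+k)%nat i l = rsum n (fun m => W s i m * W k m l)) /\
 (forall i, (i<n)%nat -> 0 < W 1%nat i i).

Definition Reach (W : nat -> mat) i l := exists s, 0 < W s i l.

Lemma W_le1 n W k i l : Good n W -> (i<n)%nat -> (l<n)%nat -> W k i l <= 1.
Proof. intros (H0&H1&_&_) Hi Hl. rewrite <- (H1 k i Hi).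
  apply (rsum_ge_term n (fun l => W k i l)); auto. Qed.

Lemma pos_mono n W s t i l : Good n W -> (i<n)%nat -> (l<n)%nat ->
  0 < W s i l -> 0 < W (s+t)%nat i l.
Proof. intros HG Hi Hl Hp. destruct HG as (H0&H1&Hm&Hd) eqn:E. induction t.
  rewrite Nat.add_0_r; auto.
  replace (s + S t)%nat with ((s+t)+1)%nat by lia. rewrite Hm by auto.
  eapply Rlt_le_trans; [|apply (rsum_ge_term n (fun m => W (s+t)%nat i m * W 1%nat m l) l)].
  - apply Rmult_lt_0_compat; auto.
  - intros m Hm'. apply Rmult_le_pos; auto.
  - auto. Qed.

Lemma reach_trans n W i j l : Good n W -> (i<n)%nat -> (j<n)%nat -> (l<n)%nat ->
  Reach W i j -> Reach W j l -> Reach W i l.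
Proof. intros HG Hi Hj Hl [s Hs] [t Ht]. destruct HG as (H0&H1&Hm&Hd) eqn:E.
  exists (s+t)%nat. rewrite Hm by auto.
  eapply Rlt_le_trans; [|apply (rsum_ge_term n (fun m => W s i m * W t m l) j)].
  - apply Rmult_lt_0_compat; auto.
  - intros m Hm'. apply Rmult_le_pos; auto.
  - auto. Qed.

Lemma reach_refl n W i : Good n W -> (i<n)%nat -> Reach W i i.
Proof. intros (_&_&_&Hd) Hi. exists 1%nat; auto. Qed.

Lemma notreach_zero n W s i l : Good n W -> (i<n)%nat -> (l<n)%nat -> ~ Reach W i l -> W s i l = 0.
Proof. intros (H0&_) Hi Hl Hn. assert (H := H0 s i l Hi Hl).
  destruct H as [H|H]; auto. exfalso; apply Hn; exists s; auto. Qed.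

Lemma fin_choice n (Q : nat -> nat -> Prop) :
  (forall i K K', (K <= K')%nat -> Q i K -> Q i K') ->
  (forall i, (i<n)%nat -> exists K, Q i K) -> exists K, forall i, (i<n)%nat -> Q i K.
Proof. intros Hmo. induction n; intros H. exists 0%nat; intros; lia.
  destruct IHn as [K1 HK1]. intros; apply H; lia.
  destruct (H n ltac:(lia)) as [K2 HK2]. exists (K1+K2)%nat. intros i Hi.
  destruct (Nat.eq_dec i n). subst; apply (Hmo _ K2); auto; lia.
  apply (Hmo _ K1); [lia|]. apply HK1; lia. Qed.

Lemma fin_min n (Pr : nat -> R -> Prop) :
  (forall i d d', 0 < d' -> d' <= d -> Pr i d -> Pr i d') ->
  (forall i, (i<n)%nat -> exists d, 0 < d /\ Pr i d) -> exists d, 0 < d /\ forall i, (i<n)%nat -> Pr i d.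
Proof. intros Hmo. induction n; intros H. exists 1; split; [lra|intros; lia].
  destruct IHn as [d1 [Hd1 HK1]]. intros; apply H; lia.
  destruct (H n ltac:(lia)) as [d2 [Hd2 HK2]]. exists (Rmin d1 d2). split.
  apply Rmin_pos; auto. intros i Hi.
  destruct (Nat.eq_dec i n). subst; apply (Hmo _ d2); auto. apply Rmin_pos; auto. apply Rmin_r.
  apply (Hmo _ d1); auto. apply Rmin_pos; auto. apply Rmin_l. apply HK1; lia. Qed.

Lemma unif n W : Good n W -> exists M d, 0 < d /\
  forall i l, (i<n)%nat -> (l<n)%nat -> Reach W i l -> d <= W M i l.
Proof. intros HG.
  assert (HM : exists M, forall i, (i<n)%nat -> (i<n)%nat -> forall l, (l<n)%nat -> Reach W i l -> 0 < W M i l).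
  { apply fin_choice.
    - intros i K K' HK HQ Hi l Hl Hr. replace K' with (K + (K'-K))%nat by lia.
      apply (pos_mono n); auto.
    - intros i Hi. destruct (fin_choice n (fun l K => (i<n)%nat -> (l<n)%nat -> Reach W i l -> 0 < W K i l)) as [K HK];
      [| |exists K; intros _ l Hl; apply HK; auto].
      + intros l K K' HK HQ Hi' Hl Hr. replace K' with (K + (K'-K))%nat by lia.
        apply (pos_mono n); auto.
      + intros l Hl. destruct (classic (Reach W i l)) as [[s Hs]|Hn].
        exists s; auto. exists 0%nat; intros; contradiction. }
  destruct HM as [M HM]. exists M.
  destruct (fin_min n (fun i d => (i<n)%nat -> forall l, (l<n)%nat -> Reach W i l -> d <= W M i l)) as [d [Hd HP]];
    [| |exists d; split; auto; intros i l Hi Hl Hr; apply HP; auto].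
  - intros i d d' _ Hdd HP Hi l Hl Hr. specialize (HP Hi l Hl Hr); lra.
  - intros i Hi.
    destruct (fin_min n (fun l d => (l<n)%nat -> Reach W i l -> d <= W M i l)) as [d [Hd HP]].
    + intros l d d' _ Hdd HP Hl Hr. specialize (HP Hl Hr); lra.
    + intros l Hl. destruct (classic (Reach W i l)) as [Hr|Hn].
      exists (W M i l). split; [apply HM; auto| intros; lra].
      exists 1; split; [lra| intros; contradiction].
    + exists d; split; auto.
Qed.

Lemma dbl n (wa wb x : nat -> R) : rsum n wa = 1 -> rsum n wb = 1 ->
 rsum n (fun m => wa m * x m) - rsum n (fun m => wb m * x m) =
 rsum n (fun m => rsum n (fun m' => wa m * wb m' * (x m - x m'))).
Proof. intros Ha Hb.
  rewrite (rsum_ext n (fun m => rsum n (fun m' => wa m * wb m' * (x m - x m'))) (fun m => (wa m * x m) * 1 - wa m * rsum n (fun m' => wb m' * x m'))).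
  rewrite rsum_minus, rsum_scal_r, rsum_scal_r, Ha; ring.
  intros m Hm. rewrite <- Hb, <- (rsum_scal_l n (wa m * x m)), <- rsum_scal_l, <- rsum_minus.
  apply rsum_ext; intros; ring. Qed.

Lemma term_bound wa wb d e : 0 <= wa -> 0 <= wb -> (0 < wa -> 0 < wb -> Rabs d <= e) ->
  Rabs (wa * wb * d) <= wa * wb * e.
Proof. intros Ha Hb H. rewrite Rabs_mult, Rabs_mult, (Rabs_right wa), (Rabs_right wb) by lra.
  destruct Ha as [Ha|Ha]; [|subst; lra]. destruct Hb as [Hb|Hb]; [|subst; lra].
  apply Rmult_le_compat_l. nra. auto. Qed.

Definition Osc n W i j0 k e := forall a b, (a<n)%nat -> (b<n)%nat -> Reach W i a -> Reach W i b ->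
  Rabs (W k a j0 - W k b j0) <= e.

Lemma dsum_const n (wa wb : nat -> R) e : rsum n wa = 1 -> rsum n wb = 1 ->
  rsum n (fun m => rsum n (fun m' => wa m * wb m' * e)) = e.
Proof. intros Ha Hb. rewrite (rsum_ext n _ (fun m => wa m * e)). rewrite rsum_scal_r, Ha; ring.
  intros m _. rewrite (rsum_ext n _ (fun m' => (wa m * e) * wb m')), rsum_scal_l, Hb. ring.
  intros; ring. Qed.

Lemma reach_of_pos n W s a m : Good n W -> (a<n)%nat -> (m<n)%nat -> 0 < W s a m -> Reach W a m.
Proof. intros; exists s; auto. Qed.

Lemma osc_step n W i j0 s k e : Good n W -> (i<n)%nat -> (j0<n)%nat ->
  Osc n W i j0 k e -> Osc n W i j0 (s+k) e.
Proof. intros HG Hi Hj0 HO a b Ha Hb Hra Hrb. destruct HG as (H0&H1&Hm&Hd) eqn:E.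
  rewrite (Hm s k a j0), (Hm s k b j0) by auto.
  rewrite (dbl n (fun m => W s a m) (fun m => W s b m) (fun m => W k m j0)) by auto.
  eapply Rle_trans. apply rsum_abs. eapply Rle_trans. apply rsum_le. intros m Hm'. apply rsum_abs.
  rewrite <- (dsum_const n (fun m => W s a m) (fun m => W s b m) e) by auto.
  apply rsum_le; intros m Hm'. apply rsum_le; intros m' Hm''.
  apply term_bound; auto. intros Pa Pb. apply HO; auto.
  apply (reach_trans n W i a m); auto. exists s; auto.
  apply (reach_trans n W i b m'); auto. exists s; auto. Qed.

Lemma osc_M n W i j0 M d k e : Good n W -> (i<n)%nat -> (j0<n)%nat ->
  (forall j, (j<n)%nat -> Reach W i j -> Reach W j i) ->
  (forall a l, (a<n)%nat -> (l<n)%nat -> Reach W a l -> d <= W M a l) -> 0 <= d ->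
  Osc n W i j0 k e -> Osc n W i j0 (M+k) ((1 - d*d) * e).
Proof. intros HG Hi Hj0 Hcl Hu Hd0 HO a b Ha Hb Hra Hrb. destruct HG as (H0&H1&Hm&Hd) eqn:E.
  assert (He : 0 <= e). { eapply Rle_trans; [apply Rabs_pos|]. apply (HO i i); auto; apply (reach_refl n); auto. }
  rewrite (Hm M k a j0), (Hm M k b j0) by auto.
  rewrite (dbl n (fun m => W M a m) (fun m => W M b m) (fun m => W k m j0)) by auto.
  eapply Rle_trans. apply rsum_abs. eapply Rle_trans. apply rsum_le. intros m Hm'. apply rsum_abs.
  eapply Rle_trans. apply (rsum_le n _ (fun m => rsum n (fun m' => W M a m * W M b m' * e -
     (if Nat.eqb m i then if Nat.eqb m' i then W M a m * W M b m' * e else 0 else 0)))).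
  - intros m Hm'. apply rsum_le; intros m' Hm''.
    destruct (Nat.eqb_spec m i); destruct (Nat.eqb_spec m' i).
    + subst. rewrite Rminus_diag, Rmult_0_r, Rabs_R0. lra.
    + rewrite Rminus_0_r. apply term_bound; auto. intros Pa Pb. apply HO; auto.
      apply (reach_trans n W i a m); auto. exists M; auto.
      apply (reach_trans n W i b m'); auto. exists M; auto.
    + rewrite Rminus_0_r. apply term_bound; auto. intros Pa Pb. apply HO; auto.
      apply (reach_trans n W i a m); auto. exists M; auto.
      apply (reach_trans n W i b m'); auto. exists M; auto.
    + rewrite Rminus_0_r. apply term_bound; auto. intros Pa Pb. apply HO; auto.
      apply (reach_trans n W i a m); auto. exists M; auto.
      apply (reach_trans n W i b m'); auto. exists M; auto.
  - rewrite (rsum_ext n _ (fun m => rsum n (fun m' => W M a m * W M b m' * e) -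
        (if Nat.eqb m i then W M a m * W M b i * e else 0))).
    2:{ intros m Hm'. rewrite rsum_minus. f_equal. destruct (Nat.eqb m i).
        apply (rsum_delta n (fun m' => W M a m * W M b m' * e)); auto.
        rewrite rsum_const; ring. }
    rewrite rsum_minus, dsum_const by auto.
    rewrite (rsum_delta n (fun m => W M a m * W M b i * e)) by auto.
    assert (d <= W M a i) by (apply Hu; auto).
    assert (d <= W M b i) by (apply Hu; auto).
    assert (d * d <= W M a i * W M b i) by (apply Rmult_le_compat; lra).
    nra.
Qed.

Lemma Rabs_le_inv x a : Rabs x <= a -> -a <= x <= a.
Proof. unfold Rabs; destruct (Rcase_abs x); intros; lra. Qed.

Lemma anchor_cauchy (u : nat -> R) :
  (forall eps, 0 < eps -> exists N, forall p, Rabs (u (p+N)%nat - u N) <= eps) -> exists l, Un_cv u l.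
Proof. intros H.
  assert (Hc : Cauchy_crit u).
  { intros eps Heps. destruct (H (eps/3)) as [N HN]; [lra|]. exists N. intros a b Ha Hb.
    unfold Rdist. replace a with ((a-N)+N)%nat by lia. replace b with ((b-N)+N)%nat by lia.
    assert (H1 := HN (a-N)%nat). assert (H2 := HN (b-N)%nat).
    apply Rabs_le_inv in H1. apply Rabs_le_inv in H2. apply Rabs_def1; lra. }
  destruct (R_complete u Hc) as [l Hl]. exists l; auto. Qed.

Lemma osc_anchor n W i j0 k e : Good n W -> (i<n)%nat -> (j0<n)%nat ->
  Osc n W i j0 k e -> forall p, Rabs (W (p+k)%nat i j0 - W k i j0) <= e.
Proof. intros HG Hi Hj0 HO p. destruct HG as (H0&H1&Hm&Hd) eqn:E.
  rewrite Hm by auto.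
  replace (W k i j0) with (rsum n (fun m => W p i m * W k i j0)) by (rewrite rsum_scal_r, H1; auto; ring).
  rewrite <- rsum_minus. eapply Rle_trans. apply rsum_abs.
  replace e with (rsum n (fun m => W p i m * e)) by (rewrite rsum_scal_r, H1; auto; ring).
  apply rsum_le; intros m Hm'. rewrite <- Rmult_minus_distr_l, Rabs_mult, Rabs_right by (apply Rle_ge; auto).
  destruct (H0 p i m Hi Hm') as [Hp|Hp]; [|rewrite <- Hp; lra].
  apply Rmult_le_compat_l; [lra|]. apply HO; auto. exists p; auto. apply (reach_refl n); auto. Qed.

Lemma osc_one n W i j0 k : Good n W -> (j0<n)%nat -> Osc n W i j0 k 1.
Proof. intros HG Hj0 a b Ha Hb _ _.
  assert (W k a j0 <= 1) by (apply (W_le1 n); auto).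
  assert (W k b j0 <= 1) by (apply (W_le1 n); auto).
  destruct HG as (G0&G1&Gm&Gd).
  assert (0 <= W k a j0) by auto. assert (0 <= W k b j0) by auto.
  apply Rabs_le; lra. Qed.

Lemma closed_conv n W i j0 : Good n W -> (i<n)%nat -> (j0<n)%nat ->
  (forall j, (j<n)%nat -> Reach W i j -> Reach W j i) ->
  exists l, Un_cv (fun k => W k i j0) l.
Proof. intros HG Hi Hj0 Hcl.
  destruct (unif n W HG) as [M [d [Hd Hu]]].
  assert (Hd1 : d <= 1). { eapply Rle_trans. apply (Hu i i); auto. apply (reach_refl n); auto.
    apply (W_le1 n); auto. }
  assert (HO : forall t, Osc n W i j0 (t*M)%nat ((1-d*d)^t)).
  { induction t. simpl. apply osc_one; auto.
    replace (S t * M)%nat with (M + t*M)%nat by lia. simpl.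
    apply (osc_M n W i j0 M d); auto; try lra. }
  apply anchor_cauchy. intros eps Heps.
  destruct (pow_lt_1_zero (1-d*d)) with (y := eps) as [N HN]; auto.
  { rewrite Rabs_right; [|apply Rle_ge]; nra. }
  exists (N*M)%nat. intros p.
  eapply Rle_trans. apply (osc_anchor n W i j0 _ ((1-d*d)^N)); auto.
  assert (H := HN N (le_n N)). apply Rabs_def2 in H. lra. Qed.

Lemma conv_cauchy (u : nat -> R) l : Un_cv u l -> forall eta, 0 < eta ->
  exists K, forall k, (K <= k)%nat -> forall p, Rabs (u (p+k)%nat - u k) <= eta.
Proof. intros Hu eta Heta. destruct (Hu (eta/2)) as [K HK]; [lra|]. exists K. intros k Hk p.
  assert (H1 := HK (p+k)%nat ltac:(lia)). assert (H2 := HK k ltac:(lia)). unfold Rdist in *.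
  apply Rabs_def2 in H1. apply Rabs_def2 in H2. apply Rabs_le; lra. Qed.

Definition Tr n W i j0 k e := forall p a, (a<n)%nat -> Reach W i a -> Reach W a i ->
  Rabs (W (p+k)%nat a j0 - W k a j0) <= e.

Lemma trans_step n W i j0 j1 M d eta K k e : Good n W -> (i<n)%nat -> (j0<n)%nat -> (j1<n)%nat ->
  Reach W i j1 -> ~ Reach W j1 i ->
  (forall a l, (a<n)%nat -> (l<n)%nat -> Reach W a l -> d <= W M a l) -> 0 <= eta ->
  (forall l, (l<n)%nat -> Reach W i l -> ~ Reach W l i -> forall k, (K <= k)%nat -> forall p,
      Rabs (W (p+k)%nat l j0 - W k l j0) <= eta) ->
  (K <= k)%nat -> 0 <= e -> Tr n W i j0 k e -> Tr n W i j0 (M+k)%nat ((1-d)*e + eta).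
Proof. intros HG Hi Hj0 Hj1 Hr1 Hn1 Hu Heta HK Hk He HT p a Ha Hra Har.
  destruct HG as (H0&H1&Hm&Hd) eqn:E.
  replace (p + (M+k))%nat with (M + (p+k))%nat by lia.
  rewrite (Hm M (p+k)%nat), (Hm M k) by auto. rewrite <- rsum_minus.
  eapply Rle_trans. apply rsum_abs.
  eapply Rle_trans. apply (rsum_le n _ (fun m => W M a m * eta + (W M a m * e -
      (if Nat.eqb m j1 then W M a m * e else 0)))).
  - intros m Hm'. rewrite <- Rmult_minus_distr_l, Rabs_mult, (Rabs_right (W M a m)) by (apply Rle_ge; auto).
    destruct (H0 M a m Ha Hm') as [Hp|Hp].
    + assert (Rim : Reach W i m). { apply (reach_trans n W i a m); auto. exists M; auto. }
      destruct (classic (Reach W m i)) as [Hmi|Hmi].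
      * destruct (Nat.eqb_spec m j1). subst; contradiction.
        assert (Rabs (W (p + k)%nat m j0 - W k m j0) <= e) by (apply HT; auto).
        assert (W M a m * Rabs (W (p + k)%nat m j0 - W k m j0) <= W M a m * e) by (apply Rmult_le_compat_l; lra).
        nra.
      * assert (Rabs (W (p + k)%nat m j0 - W k m j0) <= eta) by (apply HK; auto).
        assert (W M a m * Rabs (W (p + k)%nat m j0 - W k m j0) <= W M a m * eta) by (apply Rmult_le_compat_l; lra).
        destruct (Nat.eqb m j1); nra.
    + rewrite <- Hp. destruct (Nat.eqb m j1); lra.
  - rewrite rsum_plus, rsum_minus, rsum_scal_r, rsum_scal_r, H1 by auto.
    rewrite (rsum_delta n (fun m => W M a m * e)) by auto.
    assert (d <= W M a j1). { apply Hu; auto. apply (reach_trans n W a i j1); auto. }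
    nra.
Qed.

Lemma tr_one n W i j0 k : Good n W -> (j0<n)%nat -> Tr n W i j0 k 1.
Proof. intros HG Hj0 p a Ha _ _.
  assert (W (p+k)%nat a j0 <= 1) by (apply (W_le1 n); auto).
  assert (W k a j0 <= 1) by (apply (W_le1 n); auto).
  destruct HG as (G0&G1&Gm&Gd).
  assert (0 <= W (p+k)%nat a j0) by auto. assert (0 <= W k a j0) by auto.
  apply Rabs_le; lra. Qed.

Lemma trans_conv n W i j0 j1 : Good n W -> (i<n)%nat -> (j0<n)%nat -> (j1<n)%nat ->
  Reach W i j1 -> ~ Reach W j1 i ->
  (forall l, (l<n)%nat -> Reach W i l -> ~ Reach W l i -> exists lim, Un_cv (fun k => W k l j0) lim) ->
  exists lim, Un_cv (fun k => W k i j0) lim.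
Proof. intros HG Hi Hj0 Hj1 Hr1 Hn1 IH.
  destruct (unif n W HG) as [M [d [Hd Hu]]].
  assert (Hd1 : d <= 1). { eapply Rle_trans. apply (Hu i i); auto. apply (reach_refl n); auto.
    apply (W_le1 n); auto. }
  apply anchor_cauchy. intros eps Heps.
  set (eta := eps * d / 2).
  assert (Heta : 0 < eta) by (unfold eta; apply Rmult_lt_0_compat; [nra|lra]).
  destruct (fin_choice n (fun l K => (l<n)%nat -> Reach W i l -> ~ Reach W l i -> forall k, (K <= k)%nat -> forall p,
      Rabs (W (p+k)%nat l j0 - W k l j0) <= eta)) as [K HK].
  { intros l K K' HKK HQ Hl Hr Hn k Hk p. apply HQ; auto; lia. }
  { intros l Hl. destruct (classic (Reach W i l /\ ~ Reach W l i)) as [[Hr Hn]|Hno].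
    - destruct (IH l Hl Hr Hn) as [lim Hlim]. destruct (conv_cauchy _ _ Hlim eta Heta) as [K HK].
      exists K; intros; auto.
    - exists 0%nat; intros _ Hr Hn; exfalso; tauto. }
  assert (HT : forall t, Tr n W i j0 (t*M + K)%nat ((1-d)^t + eta/d)).
  { induction t.
    - intros p a Ha Hra Har. eapply Rle_trans. apply (tr_one n W i j0); auto.
      simpl. assert (0 <= eta/d) by (unfold Rdiv; apply Rmult_le_pos; [lra|apply Rlt_le, Rinv_0_lt_compat; lra]). lra.
    - replace (S t * M + K)%nat with (M + (t*M+K))%nat by lia.
      replace ((1-d)^(S t) + eta/d) with ((1-d)*((1-d)^t + eta/d) + eta) by (simpl; field; lra).
      assert (0 <= (1-d)^t) by (apply pow_le; lra).
      assert (0 <= eta/d) by (unfold Rdiv; apply Rmult_le_pos; [lra|apply Rlt_le, Rinv_0_lt_compat; lra]).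
      apply (trans_step n W i j0 j1 M d eta K); auto; try lra; try lia.
      }
  destruct (pow_lt_1_zero (1-d)) with (y := eps/2) as [N HN]; [|lra|].
  { rewrite Rabs_right; lra. }
  exists (N*M + K)%nat. intros p.
  eapply Rle_trans. apply (HT N p i); auto; apply (reach_refl n); auto.
  assert (H := HN N (le_n N)). apply Rabs_def2 in H.
  assert (eta / d = eps/2) by (unfold eta; field; lra). lra.
Qed.

Fixpoint ncount (n : nat) (f : nat -> nat) : nat :=
  match n with O => O | S m => (ncount m f + f m)%nat end.

Lemma ncount_le n f g : (forall l, (l<n)%nat -> (f l <= g l)%nat) -> (ncount n f <= ncount n g)%nat.
Proof. induction n; simpl; intros H; [lia|]. assert (H1 := H n ltac:(lia)).
  assert (ncount n f <= ncount n g)%nat by (apply IHn; intros; apply H; lia). lia. Qed.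

Lemma ncount_lt n f g i : (forall l, (l<n)%nat -> (f l <= g l)%nat) -> (i<n)%nat -> (f i < g i)%nat ->
  (ncount n f < ncount n g)%nat.
Proof. induction n; simpl; intros H Hi Hfg; [lia|].
  destruct (Nat.eq_dec i n). subst.
  assert (ncount n f <= ncount n g)%nat by (apply ncount_le; intros; apply H; lia). lia.
  assert (ncount n f < ncount n g)%nat by (apply IHn; auto; try (intros; apply H); lia).
  assert (H1 := H n ltac:(lia)). lia. Qed.

Definition cnt n W i := ncount n (fun l => if excluded_middle_informative (Reach W i l) then 1%nat else 0%nat).

Lemma cnt_lt n W i l : Good n W -> (i<n)%nat -> (l<n)%nat -> Reach W i l -> ~ Reach W l i ->
  (cnt n W l < cnt n W i)%nat.
Proof. intros HG Hi Hl Hr Hn. unfold cnt. apply (ncount_lt n _ _ i); auto.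
  - intros m Hm. destruct (excluded_middle_informative (Reach W l m)); [|lia].
    destruct (excluded_middle_informative (Reach W i m)) as [_|Hc]; [lia|].
    exfalso; apply Hc. apply (reach_trans n W i l m); auto.
  - destruct (excluded_middle_informative (Reach W l i)); [contradiction|].
    destruct (excluded_middle_informative (Reach W i i)) as [_|Hc]; [lia|].
    exfalso; apply Hc, (reach_refl n); auto. Qed.

Lemma all_conv n W j0 : Good n W -> (j0<n)%nat -> forall i, (i<n)%nat ->
  exists lim, Un_cv (fun k => W k i j0) lim.
Proof. intros HG Hj0.
  assert (H : forall N i, (i<n)%nat -> (cnt n W i < N)%nat -> exists lim, Un_cv (fun k => W k i j0) lim).
  { induction N; intros i Hi Hc; [lia|].
    destruct (classic (exists j1, (j1<n)%nat /\ Reach W i j1 /\ ~ Reach W j1 i)) as [[j1 (Hj1&Hr&Hn)]|Hno].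
    - apply (trans_conv n W i j0 j1); auto.
      intros l Hl Hrl Hnl. apply IHN; auto.
      assert (H := cnt_lt n W i l HG Hi Hl Hrl Hnl). lia.
    - apply (closed_conv n W i j0); auto.
      intros j Hj Hr. apply NNPP. intros Hn. apply Hno. exists j; auto. }
  intros i Hi. apply (H (S (cnt n W i))); auto. Qed.

Lemma cv_ext (u v : nat -> R) l : (forall k, u k = v k) -> Un_cv u l -> Un_cv v l.
Proof. intros H Hu eps He. destruct (Hu eps He) as [N HN]. exists N; intros k Hk.
  rewrite <- H; auto. Qed.

Lemma cv_const c : Un_cv (fun _ => c) c.
Proof. intros eps He. exists 0%nat. intros. unfold Rdist. rewrite Rminus_diag, Rabs_R0; lra. Qed.

Lemma cv_shift (u : nat -> R) l : Un_cv (fun k => u (S k)) l -> Un_cv u l.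
Proof. intros Hu eps He. destruct (Hu eps He) as [N HN]. exists (S N). intros k Hk.
  destruct k; [lia|]. apply HN; lia. Qed.

Lemma rsum_cv n (f : nat -> nat -> R) : (forall m, (m<n)%nat -> exists l, Un_cv (fun k => f k m) l) ->
  exists l, Un_cv (fun k => rsum n (f k)) l.
Proof. induction n; intros H. exists 0. simpl. apply cv_const.
  destruct IHn as [l1 H1]. intros; apply H; lia.
  destruct (H n ltac:(lia)) as [l2 H2]. exists (l1+l2). simpl. apply CV_plus; auto. Qed.

Lemma diag_nonneg n f i : rsum n f = 0 -> (forall j, (j<n)%nat -> j <> i -> f j <= 0) -> (i<n)%nat -> 0 <= f i.
Proof. intros H0 H Hi. rewrite <- H0. rewrite <- (rsum_delta n f i Hi). apply rsum_le.
  intros m Hm. destruct (Nat.eqb_spec m i). lra. apply H; auto. Qed.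

Theorem theorem6 (n : nat) (L : mat) :
  standardized_laplacian n L ->
  semiconvergent n L /\ semiconvergent n (mat_add L (Jmat n)).
Proof.
  intros [HL1 HL2].
  destruct (Nat.eq_dec n 0) as [Hn0|Hn0].
  { subst. split; intros i j Hi; lia. }
  assert (Hn : 0 < INR n) by (apply lt_0_INR; lia).
  set (P := mat_add L (Jmat n)).
  assert (HP0 : forall i j, (i<n)%nat -> (j<n)%nat -> 0 <= P i j).
  { intros i j Hi Hj. unfold P, mat_add, Jmat. destruct (Nat.eq_dec i j) as [|Hne].
    - subst. assert (0 <= L j j). { apply (diag_nonneg n (fun k => L j k)); auto.
        intros; apply HL2; auto. }
      assert (0 < / INR n) by (apply Rinv_0_lt_compat; auto). lra.
    - destruct (HL2 i j Hi Hj Hne) as [Hle Hab]. rewrite Rabs_left1 in Hab; auto. lra. }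
  assert (HPd : forall i, (i<n)%nat -> 0 < P i i).
  { intros i Hi. unfold P, mat_add, Jmat. assert (0 <= L i i). { apply (diag_nonneg n (fun k => L i k)); auto.
        intros; apply HL2; auto. }
      assert (0 < / INR n) by (apply Rinv_0_lt_compat; auto). lra. }
  assert (HP1 : forall i, (i<n)%nat -> rsum n (fun j => P i j) = 1).
  { intros i Hi. unfold P, mat_add, Jmat. rewrite rsum_plus, HL1, rsum_const by auto. field. lra. }
  set (W := fun k => mat_pow n P k).
  assert (HG : Good n W).
  { split; [|split; [|split]].
    - intros k; induction k; intros i l Hi Hl; unfold W; simpl.
      unfold mat_id; destruct (Nat.eqb i l); lra.
      unfold mat_mul. apply rsum_nonneg. intros m Hm. apply Rmult_le_pos; [apply IHk|apply HP0]; auto.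
    - intros k; induction k; intros i Hi; unfold W; simpl.
      apply rowsum_id; auto.
      rewrite rowsum_mul. rewrite (rsum_ext n _ (fun m => mat_pow n P k i m * 1)).
      rewrite rsum_scal_r. assert (Hk := IHk i Hi). unfold W in Hk. change (rsum n (mat_pow n P k i)) with (rsum n (fun l => mat_pow n P k i l)). rewrite Hk. ring.
      intros m Hm. rewrite HP1; auto.
    - intros s k i l Hi Hl. unfold W. apply mpow_add; auto.
    - intros i Hi. unfold W. simpl. rewrite mul_id_l; auto. }
  assert (HPc : semiconvergent n P).
  { intros i j Hi Hj. apply (all_conv n W j HG Hj i Hi). }
  split; auto.
  assert (HLpow : forall k i j, (i<n)%nat -> (j<n)%nat ->
     mat_pow n L (S k) i j = mat_mul n (mat_pow n L 1) (mat_pow n P k) i j).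
  { induction k; intros i j Hi Hj.
    - simpl mat_pow at 2. rewrite mul_id_r; auto.
    - change (mat_pow n L (S (S k)) i j) with (mat_mul n (mat_pow n L (S k)) L i j).
      transitivity (mat_mul n (mat_pow n L (S k)) P i j).
      + unfold P, mat_mul, mat_add, Jmat.
        rewrite (rsum_ext n (fun m => mat_pow n L (S k) i m * (L m j + / INR n))
                 (fun m => mat_pow n L (S k) i m * L m j + mat_pow n L (S k) i m * / INR n)) by (intros; ring).
        rewrite rsum_plus, rsum_scal_r.
        assert (Hrs : rsum n (fun m => mat_pow n L (S k) i m) = 0).
        { simpl mat_pow. rewrite rowsum_mul. rewrite (rsum_ext n _ (fun _ => 0)).
          rewrite rsum_const; ring. intros m Hm. rewrite HL1; auto; ring. }
        change (rsum n (mat_pow n L (S k) i)) with (rsum n (fun m => mat_pow n L (S k) i m)). rewrite Hrs. ring.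
      + rewrite (mul_ext_l n _ (mat_mul n (mat_pow n L 1) (mat_pow n P k))) by (intros; apply IHk; auto).
        rewrite mul_assoc. reflexivity. }
  intros i j Hi Hj.
  destruct (rsum_cv n (fun k m => mat_pow n L 1 i m * mat_pow n P k m j)) as [l Hl].
  { intros m Hm. destruct (HPc m j Hm Hj) as [l Hl]. exists (mat_pow n L 1 i m * l).
    apply CV_mult; auto. apply cv_const. }
  exists l. apply cv_shift. eapply cv_ext; [|exact Hl].
  intros k. cbv beta. rewrite HLpow; auto.
Qed.
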